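(* Let $\nu,\mu\in\mathbb{N}$, let $h>0$ and $r\in\mathbb{N}$ with $r\geq 1$. Let $\mathbf{F}_x\in\mathbb{R}^{\nu\times\nu}$, $\mathbf{F}_y\in\mathbb{R}^{\nu\times\mu}$, $\mathbf{G}_x\in\mathbb{R}^{\mu\times\nu}$, $\mathbf{G}_y\in\mathbb{R}^{\mu\times\mu}$ be the Jacobian matrices $\partial\mathbf f/\partial\mathbf x$, $\partial\mathbf f/\partial\mathbf y$, $\partial\mathbf g/\partial\mathbf x$, $\partial\mathbf g/\partial\mathbf y$ evaluated at an equilibrium $(\mathbf x_o,\mathbf y_o)$ of the system $\mathbf x'=\mathbf f(\mathbf x,\mathbf y)$, $\mathbf 0=\mathbf g(\mathbf x,\mathbf y)$. Suppose vectors $\tilde{\mathbf x}_n,\tilde{\mathbf x}_{n+1},\tilde{\boldsymbol\xi}^{(0)}_{n+1},\dots,\tilde{\boldsymbol\xi}^{(r)}_{n+1}\in\mathbb{R}^{\nu}$ and $\tilde{\mathbf y}_n,\tilde{\mathbf y}_{n+1},\tilde{\mathbf y}_{\rm int}\in\mathbb{R}^{\mu}$ satisfy the linearized Heun predictor-corrector equations $$\tilde{\boldsymbol\xi}^{(0)}_{n+1}=\tilde{\mathbf x}_n+h(\mathbf F_x\tilde{\mathbf x}_n+\mathbf F_y\tilde{\mathbf y}_n),$$ $$\tilde{\boldsymbol\xi}^{(i)}_{n+1}=\tilde{\mathbf x}_n+\tfrac{h}{2}\big[\mathbf F_x\tilde{\mathbf x}_n+\mathbf F_x\tilde{\boldsymbol\xi}^{(i-1)}_{n+1}+\mathbf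 F_y(\tilde{\mathbf y}_n+\tilde{\mathbf y}_{\rm int})\big],\quad i=1,\dots,r,$$ $$\tilde{\mathbf x}_{n+1}=\tilde{\boldsymbol\xi}^{(r)}_{n+1},\qquad \mathbf 0=\mathbf G_x\tilde{\mathbf x}_{n+1}+\mathbf G_y\tilde{\mathbf y}_{n+1}.$$ For $m\in\mathbb{N}$ define $\mathbf C_m=\sum_{j=0}^{m}\big(\tfrac{h}{2}\mathbf F_x\big)^j$ (so $\mathbf C_0=\mathbf I$). Then $$\begin{bmatrix}\mathbf I&\mathbf 0\\ \mathbf G_x&\mathbf G_y\end{bmatrix}\begin{bmatrix}\tilde{\mathbf x}_{n+1}\\ \tilde{\mathbf y}_{n+1}\end{bmatrix}=\begin{bmatrix}\mathbf I+h\mathbf C_r\mathbf F_x & \big(h\mathbf C_r-\tfrac{h}{2}\mathbf C_{r-1}\big)\mathbf F_y\\ \mathbf 0&\mathbf 0\end{bmatrix}\begin{bmatrix}\tilde{\mathbf x}_n\\ \tilde{\mathbf y}_n\end{bmatrix}+\begin{bmatrix}\tfrac{h}{2}\mathbf C_{r-1}\mathbf F_y\tilde{\mathbf y}_{\rm int}\\ \mathbf 0\end{bmatrix}.$$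
   Context: Setting: a power system model is a differential-algebraic system $\mathbf x'(t)=\mathbf f(\mathbf x(t),\mathbf y(t))$, $\mathbf 0=\mathbf g(\mathbf x(t),\mathbf y(t))$ with states $\mathbf x\in\mathbb{R}^\nu$, algebraic variables $\mathbf y\in\mathbb{R}^\mu$, and $\mathbf f,\mathbf g$ differentiable; $(\mathbf x_o,\mathbf y_o)$ is an equilibrium ($\mathbf f(\mathbf x_o,\mathbf y_o)=\mathbf 0$, $\mathbf g(\mathbf x_o,\mathbf y_o)=\mathbf 0$). Heun's method in the partitioned-solution approach with time step $h$ and $r$ corrector steps computes $\boldsymbol\xi^{(0)}_{n+1}=\mathbf x_n+h\mathbf f(\mathbf x_n,\mathbf y_n)$, $\boldsymbol\xi^{(i)}_{n+1}=\mathbf x_n+0.5h\,\mathbf f(\mathbf x_n,\mathbf y_n)+0.5h\,\mathbf f(\boldsymbol\xi^{(i-1)}_{n+1},\mathbf y_{\rm int})$, $\mathbf x_{n+1}=\boldsymbol\xi^{(r)}_{n+1}$, $\mathbf 0=h\,\mathbf g(\mathbf x_{n+1},\mathbf y_{n+1})$, where $\mathbf y_{\rm int}$ is a known value substituted for the not-yet-computed $\mathbf y_{n+1}$ (the ''interface'' value). Tildes denote deviations from the equilibrium ($\tilde{\mathbf x}_n=\mathbf x_n-\mathbf x_o$, etc.); the displayed equations in the claim are the linearization of this scheme at $(\mathbf x_o,\mathbf y_o)$. $\mathbf I$ is the identity and $\mathbf 0$ the zero matrix of appropriate dimensions. *)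

(* Defs.v *)
From mathcomp Require Import all_boot all_order all_algebra.
From mathcomp Require Import reals.
Set Implicit Arguments. Unset Strict Implicit. Unset Printing Implicit Defensive.
Import Order.TTheory GRing.Theory Num.Theory.
Local Open Scope ring_scope.

Definition Cmat (R : realType) (nu : nat) (h : R) (Fx : 'M[R]_nu) (m : nat)
  : 'M[R]_nu :=
  \sum_(j < m.+1) ((h / 2) *: Fx) ^+ j.

(* Main.v *)
Require Import Defs.
From mathcomp Require Import all_boot all_order all_algebra.
From mathcomp Require Import reals ring.
Import Order.TTheory GRing.Theory Num.Theory.
Set Implicit Arguments. Unset Strict Implicit.
Local Open Scope ring_scope.

Definition Dm (R : realType) (nu : nat) (h : R) (Fx : 'M[R]_nu) (m : nat) : 'M[R]_nu :=
  \sum_(j < m) ((h / 2) *: Fx) ^+ j.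

Lemma DS (R : realType) (nu : nat) (h : R) (Fx : 'M[R]_nu) m (v : 'cV[R]_nu) :
  Dm h Fx m.+1 *m v = v + (h/2) *: (Fx *m (Dm h Fx m *m v)).
Proof.
rewrite /Dm big_ord_recl expr0 mulmxDl mul1mx; congr (_ + _).
rewrite !mulmx_suml mulmx_sumr scaler_sumr; apply: eq_bigr => i _.
by rewrite /= exprS -mulmxE -mulmxA -scalemxAl.
Qed.

Lemma D0 (R : realType) (nu : nat) (h : R) (Fx : 'M[R]_nu) (v : 'cV[R]_nu) :
  Dm h Fx 0 *m v = 0.
Proof. by rewrite /Dm big_ord0 mul0mx. Qed.

Lemma key (R : realType) (nu mu : nat) (h : R) (r : nat)
  (Fx : 'M[R]_nu) (Fy : 'M[R]_(nu, mu))
  (xn : 'cV[R]_nu) (xi : nat -> 'cV[R]_nu) (yn yint : 'cV[R]_mu) :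
  xi 0%N = xn + h *: (Fx *m xn + Fy *m yn) ->
  (forall i : nat, (1 <= i <= r)%N ->
     xi i = xn + (h / 2) *: (Fx *m xn + Fx *m xi i.-1 + Fy *m (yn + yint))) ->
  forall i, (i <= r)%N ->
  xi i = xn + h *: (Dm h Fx i.+1 *m (Fx *m xn))
     + (h *: (Dm h Fx i.+1 *m (Fy *m yn)) - (h/2) *: (Dm h Fx i *m (Fy *m yn)))
     + (h/2) *: (Dm h Fx i *m (Fy *m yint)).
Proof.
move=> H0 HS; elim=> [_|i IH Hi].
  by rewrite H0 !DS !D0 !mulmx0 !scaler0 !addr0 subr0 scalerDr addrA.
rewrite HS ?Hi // /= IH ?(ltnW Hi) //.
rewrite !DS.
rewrite !(mulmxDr, mulmxBr, scalerDr, scalerBr, scalerA, mulmxDl, mulmxBl, scalerN, mulmxN).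
rewrite -!scalemxAr !scalerA.
apply/matrixP => a b; rewrite !mxE.
by field.
Qed.

Theorem mainTheorem1 (R : realType) (nu mu : nat) (h : R) (r : nat)
  (Fx : 'M[R]_nu) (Fy : 'M[R]_(nu, mu)) (Gx : 'M[R]_(mu, nu)) (Gy : 'M[R]_mu)
  (xn xn1 : 'cV[R]_nu) (xi : nat -> 'cV[R]_nu) (yn yn1 yint : 'cV[R]_mu) :
  0 < h -> (1 <= r)%N ->
  xi 0%N = xn + h *: (Fx *m xn + Fy *m yn) ->
  (forall i : nat, (1 <= i <= r)%N ->
     xi i = xn + (h / 2) *: (Fx *m xn + Fx *m xi i.-1 + Fy *m (yn + yint))) ->
  xn1 = xi r ->
  0 = Gx *m xn1 + Gy *m yn1 ->
  block_mx 1%:M 0 Gx Gy *m col_mx xn1 yn1 =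
    block_mx (1%:M + h *: (Cmat h Fx r *m Fx))
             ((h *: Cmat h Fx r - (h / 2) *: Cmat h Fx r.-1) *m Fy)
             (0 : 'M[R]_(mu, nu)) (0 : 'M[R]_(mu, mu))
      *m col_mx xn yn
    + col_mx ((h / 2) *: (Cmat h Fx r.-1 *m Fy *m yint)) (0 : 'cV[R]_mu).
Proof.
move=> _ Hr H0 HS Hx1 Hg.
rewrite !mul_block_col add_col_mx !mul0mx !addr0 -Hg; congr col_mx.
rewrite mul1mx Hx1 (key H0 HS (leqnn r)).
case: r Hr HS {Hx1} => [//|r] _ _ /=.
have -> : Cmat h Fx r.+1 = Dm h Fx r.+2 by [].
have -> : Cmat h Fx r = Dm h Fx r.+1 by [].
rewrite !(mulmxDl, mulmxBl, mul1mx, mulNmx) -!scalemxAl -!mulmxA.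
apply/matrixP => a b; rewrite !mxE.
by field.
Qed.
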